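(* For each $n=1,\ldots,N$ let $\mathbf{A}^{(n)}\in\mathbb{R}^{I_n\times R}$ be a random matrix with rows $\mathbf{a}^{(n)}_{i_n}\in\mathbb{R}^R$ (as column vectors), all entries having finite second moments. Assume the matrices $\mathbf{A}^{(1)},\ldots,\mathbf{A}^{(N)}$ are independent and that, for all $n$ and all $i_n$, the row vectors $\{\mathbf{a}^{(n)}_{i_n}\}$ are independent. Then $$\mathbb{E}\left[ \left\| [\![ \mathbf{A}^{(1)},\ldots, \mathbf{A}^{(N)} ]\!]\right\|_F^2 \right] = \sum_{i_1=1}^{I_1}\cdots\sum_{i_N=1}^{I_N} \left\langle \mathbb{E}\left[\mathbf{a}_{i_1}^{(1)}\mathbf{a}_{i_1}^{(1)T}\right],\ldots,\mathbb{E}\left[\mathbf{a}_{i_N}^{(N)}\mathbf{a}_{i_N}^{(N)T} \right]\right\rangle.$$ Moreover, letting $\mathbf{B}^{(n)}\in\mathbb{R}^{I_n\times R^2}$ be the matrix whose $i_n$th row is $\mathrm{vec}\left(\mathbb{E}\left[\mathbf{a}_{i_n}^{(n)}\mathbf{a}_{i_n}^{(n)T}\right]\right)^T$, we have $$\mathbb{E}\left[ \left\| [\![ \mathbf{A}^{(1)},\ldots, \mathbf{A}^{(N)} ]\!]\right\|_F^2 \right]=\mathbf{1}_{\prod_n I_n}^T \left(\bigodot_n \mathbf{B}^{(n)} \right)\mathbf{1}_{R^2},$$ where $\mathbf{1}_m$ denotes the all-ones vector of length $m$.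
   Context: The Kruskal operator $[\![ \mathbf{A}^{(1)},\ldots, \mathbf{A}^{(N)} ]\!]$ denotes the tensor $\sum_{r=1}^R \mathbf{a}^{(1)}_{\cdot r}\circ\cdots\circ\mathbf{a}^{(N)}_{\cdot r}\in\mathbb{R}^{I_1\times\cdots\times I_N}$, where $\mathbf{a}^{(n)}_{\cdot r}$ is the $r$th column of $\mathbf{A}^{(n)}$ and $\circ$ is the outer product; its $(i_1,\ldots,i_N)$ entry is $\sum_r\prod_n a^{(n)}_{i_n r}$. $\|\cdot\|_F$ is the Frobenius norm (square root of the sum of squares of all entries). The generalized inner product of $N$ matrices of the same size is $\langle\mathbf{M}^{(1)},\ldots,\mathbf{M}^{(N)}\rangle=\sum_{i,j}\prod_n M^{(n)}_{ij}$. $\mathrm{vec}$ stacks the columns of a matrix into a vector. For matrices with the same number of columns, $\mathbf{A}\odot\mathbf{B}$ is the Khatri–Rao (columnwise Kronecker) product and $\bigodot_n \mathbf{B}^{(n)} = \mathbf{B}^{(N)}\odot\cdots\odot\mathbf{B}^{(1)}$, of size $\prod_n I_n\times R^2$. *)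

(* Defs.v *)
From HB Require Import structures.
From mathcomp Require Import all_boot all_order all_algebra.
From mathcomp Require Import all_classical all_reals.
From mathcomp Require Import topology normedtype sequences measure lebesgue_measure lebesgue_integral probability.
Set Implicit Arguments. Unset Strict Implicit. Unset Printing Implicit Defensive.
Import Order.TTheory GRing.Theory Num.Theory.
Local Open Scope classical_set_scope.
Local Open Scope ring_scope.

Section Defs.
Context {R : realType}.

Definition kruskal (N Rk : nat) (I : 'I_N -> nat)
  (A : forall n : 'I_N, 'M[R]_(I n, Rk))
  (idx : {dffun forall n : 'I_N, 'I_(I n)}) : R :=
  \sum_(r < Rk) \prod_(n < N) A n (idx n) r.

Definition frob_norm (N : nat) (I : 'I_N -> nat)
  (X : {dffun forall n : 'I_N, 'I_(I n)} -> R) : R :=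
  Num.sqrt (\sum_(idx : {dffun forall n : 'I_N, 'I_(I n)}) X idx ^+ 2).

Definition ginner (N p q : nat) (M : 'I_N -> 'M[R]_(p, q)) : R :=
  \sum_(i < p) \sum_(j < q) \prod_(n < N) M n i j.

(* vec: column stacking; entry (r,s) goes to (0-based) position r + s*m *)
Definition vecmx (m q : nat) (M : 'M[R]_(m, q)) : 'cV[R]_(m * q) :=
  \col_(k < m * q) \sum_(r < m) \sum_(s < q) (k == (r + s * m)%N :> nat)%:R * M r s.

(* Khatri-Rao product A (.) B : column c is the Kronecker product a_c (x) b_c,
   whose (0-based) entry i*p + j is A i c * B j c *)
Definition khatri_rao (m p C : nat) (A : 'M[R]_(m, C)) (B : 'M[R]_(p, C))
  : 'M[R]_(m * p, C) :=
  \matrix_(k < m * p, c < C)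
    \sum_(i < m) \sum_(j < p) (k == (i * p + j)%N :> nat)%:R * (A i c * B j c).

(* iterated Khatri-Rao product B_(k-1) (.) ... (.) B_0 (.) 1, for families over nat *)
Fixpoint kr_dim (k : nat) (J : nat -> nat) : nat :=
  match k with 0 => 1%N | k'.+1 => (J k' * kr_dim k' J)%N end.

Fixpoint kr_big (C : nat) (J : nat -> nat) (B : forall k, 'M[R]_(J k, C)) (k : nat)
  : 'M[R]_(kr_dim k J, C) :=
  match k with
  | 0 => const_mx 1
  | k'.+1 => khatri_rao (B k') (kr_big B k')
  end.

(* extension of a family indexed by 'I_N to nat (dummy empty matrices beyond N) *)
Definition ext_dim (N : nat) (I : 'I_N -> nat) (k : nat) : nat :=
  match (insub k : option 'I_N) with Some n => I n | None => 0%N end.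

Definition ext_mx (N C : nat) (I : 'I_N -> nat) (B : forall n : 'I_N, 'M[R]_(I n, C))
  (k : nat) : 'M[R]_(ext_dim I k, C) :=
  match (insub k : option 'I_N) as o
    return 'M[R]_(match o with Some n => I n | None => 0%N end, C) with
  | Some n => B n
  | None => 0
  end.

(* \bigodot_n B^(n) = B^(N) (.) ... (.) B^(1), of size (prod_n I_n) x C *)
Definition khatri_rao_big (N C : nat) (I : 'I_N -> nat)
  (B : forall n : 'I_N, 'M[R]_(I n, C)) : 'M[R]_(kr_dim N (ext_dim I), C) :=
  kr_big (ext_mx B) N.

End Defs.

Section Prob.
Context {d : measure_display} {T : measurableType d} {R : realType}.

Definition gen_sigma (J : Type) (f : J -> T -> R) : set (set T) :=
  <<s [set E | exists j, exists2 B : set R, measurable B & E = f j @^-1` B] >>.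

Definition mutually_independent (P : probability T R) (K : finType)
  (F : K -> set (set T)) : Prop :=
  forall (J : {set K}) (E : K -> set T),
    (forall j, j \in J -> F j (E j)) ->
    P (\bigcap_(j in [set` J]) E j) = (\prod_(j in J) P (E j))%E.

Definition expect (P : probability T R) (X : T -> R) : R := Rintegral P setT X.

End Prob.

(* Main.v *)
Require Import Defs.
From HB Require Import structures.
From mathcomp Require Import all_boot all_order all_algebra.
From mathcomp Require Import all_classical all_reals ereal.
From mathcomp Require Import topology normedtype sequences measure lebesgue_measure lebesgue_integral probability.
From mathcomp Require Import numfun measurable_realfun ring lra zify.
Set Implicit Arguments. Unset Strict Implicit. Unset Printing Implicit Defensive.
Import Order.TTheory GRing.Theory Num.Theory numFieldNormedType.Exports.
Local Open Scope classical_set_scope.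
Local Open Scope ring_scope.
Section cnt.
Variable R : realType.
Definition cnt (L : nat) (y : R) : nat := (\sum_(k < L) (((k.+1)%:R <= y)%R : nat))%N.

Lemma cnt_S L y : cnt L.+1 y = (cnt L y + (((L.+1)%:R <= y)%R : nat))%N.
Proof. by rewrite /cnt big_ord_recr. Qed.

Lemma cnt_le L y : (cnt L y <= L)%N.
Proof. elim: L => [|L IH]; first by rewrite /cnt big_ord0. rewrite cnt_S.
case: (_ <= y)%R; rewrite ?addn1 ?addn0 //; exact: leqW. Qed.

Lemma cnt_ub L y : 0 <= y -> (cnt L y)%:R <= y.
Proof.
move=> y0; elim: L => [|L IH]; first by rewrite /cnt big_ord0.
rewrite cnt_S; have [h|h] := boolP ((L.+1)%:R <= y)%R; last by rewrite /= addn0.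
rewrite /= addn1; apply: le_trans h; rewrite ler_nat ltnS; exact: cnt_le.
Qed.

Lemma cnt_lb L y j : (j <= L)%N -> j%:R <= y -> (j <= cnt L y)%N.
Proof.
elim: L j => [|L IH] j; first by rewrite leqn0 => /eqP ->.
rewrite leq_eqVlt => /orP[/eqP -> h|]; last first.
  rewrite ltnS => jL h; rewrite cnt_S; apply: leq_trans (IH _ jL h) _; exact: leq_addr.
rewrite cnt_S h addn1 ltnS; apply: IH => //; apply: le_trans h; rewrite ler_nat.
exact: leqnSn.
Qed.
End cnt.

Section phi.
Variable R : realType.
Definition cm (m : nat) : R := ((2:R) ^+ m)^-1.
Definition phi (m : nat) (x : R) : R := cm m * (cnt (m * 2 ^ m) (2 ^+ m * x))%:R.

Lemma cm_gt0 m : 0 < cm m.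
Proof. by rewrite /cm invr_gt0 exprn_gt0. Qed.

Lemma phi_ge0 m x : 0 <= phi m x.
Proof. by rewrite /phi mulr_ge0 // ltW // cm_gt0. Qed.

Lemma phi_le m x : 0 <= x -> phi m x <= x.
Proof.
move=> x0; rewrite /phi /cm ler_pdivrMl ?exprn_gt0 //.
by apply: cnt_ub; rewrite mulr_ge0 // exprn_ge0.
Qed.

Lemma phi_lb m x : 0 <= x -> x <= m%:R -> x - cm m <= phi m x.
Proof.
move=> x0 xm; rewrite /phi.
set y := 2 ^+ m * x.
have y0 : 0 <= y by rewrite mulr_ge0 // exprn_ge0.
pose j := Num.truncn y.
have /andP[jy yj] := truncn_itv y0; rewrite -/j in jy yj.
have jL : (j <= m * 2 ^ m)%N.
  rewrite -(ler_nat R); apply: le_trans jy _.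
  by rewrite /y natrM natrX mulrC ler_wpM2r // exprn_ge0.
have := cnt_lb jL jy; rewrite -(ler_nat R) => h.
have e : x = cm m * y.
  by rewrite /cm /y mulrA mulVf ?mul1r // expf_neq0 // pnatr_eq0.
rewrite {1}e -[X in _ - X <= _]mulr1 -mulrBr; apply: ler_wpM2l; first exact: ltW (cm_gt0 m).
apply: le_trans _ h; rewrite lerBlDr; apply: ltW; by rewrite -natr1 in yj.
Qed.

Lemma phi_nd m x : 0 <= x -> phi m x <= phi m.+1 x.
Proof.
move=> x0; rewrite /phi.
set j := cnt (m * 2 ^ m) (2 ^+ m * x).
have jL := cnt_le (m * 2 ^ m) (2 ^+ m * x).
have jy : j%:R <= 2 ^+ m * x by apply: cnt_ub; rewrite mulr_ge0 // exprn_ge0.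
have h : (j.*2 <= cnt (m.+1 * 2 ^ m.+1) (2 ^+ m.+1 * x))%N.
  apply: cnt_lb.
    rewrite -muln2 expnS; apply: leq_trans (leq_mul jL (leqnn 2)) _.
    by rewrite -mulnA (mulnC _ 2) leq_mul2r leqnSn orbT.
  by rewrite -muln2 natrM exprS mulrC -mulrA ler_wpM2l.
apply: (@le_trans _ _ (cm m.+1 * (j.*2)%:R)); last first.
  by apply: ler_wpM2l; [exact: ltW (cm_gt0 _)| rewrite ler_nat].
rewrite le_eqVlt; apply/orP; left; apply/eqP; rewrite -muln2 natrM /cm exprS invfM.
have h2 : (2:R) ^+ m != 0 by rewrite expf_neq0 // pnatr_eq0.
by field.
Qed.

Lemma phi_cvg x : 0 <= x -> (fun m => phi m x) @ \oo --> x.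
Proof.
move=> x0; apply/cvgrPdist_le => e e0.
near=> m.
have xm : x <= m%:R.
  near: m; exact: nbhs_infty_ger.
have cme : cm m <= e.
  have : 1 / 2 ^+ m < interval_inference.Itv.r (interval_inference.PosNum e0).
    near: m; exact: near_infty_natSinv_expn_lt.
  by rewrite /cm div1r => /ltW.
rewrite ger0_norm ?subr_ge0 ?phi_le //.
by rewrite lerBlDr -lerBlDl; apply: le_trans (phi_lb x0 xm); rewrite lerB.
Unshelve. all: by end_near.
Qed.
End phi.
Section prodrule.
Context {d : measure_display} {T : measurableType d} {R : realType}.
Variable P : probability T R.

Definition lev (f : T -> R) (c : R) : set T := [set t | c <= f t].
Definition sfun (m : nat) (f : T -> R) (t : T) : R :=
  \sum_(k < m * 2 ^ m) cm R m * \1_(lev f ((k.+1)%:R * cm R m)) t.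

Lemma sfunE m f t : sfun m f t = phi m (f t).
Proof.
rewrite /sfun /phi /cnt -mulr_sumr natr_sum; congr (_ * _).
apply: eq_bigr => k _; rewrite indicE /lev /cm; congr ((nat_of_bool _)%:R).
apply/idP/idP => [/set_mem /= h|h]; last apply/mem_set => /=.
  by rewrite mulrC ler_pdivrMl ?exprn_gt0 in h.
by rewrite mulrC ler_pdivrMl ?exprn_gt0.
Qed.

Lemma int_sum_indic (K : finType) (c : R) (E : K -> set T) : 0 <= c ->
  (forall k, measurable (E k)) ->
  (\int[P]_t (\sum_k c * \1_(E k) t)%:E = (\sum_k c * fine (P (E k)))%:E)%E.
Proof.
move=> c0 mE.
under eq_integral do rewrite -sumEFin.
rewrite ge0_integral_sum //; last 2 first.
- move=> k; apply/measurable_EFinP; apply: measurable_funM; first exact: measurable_cst.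
  exact: measurable_indic.
- by move=> k t _; rewrite lee_fin mulr_ge0.
rewrite -sumEFin; apply: eq_bigr => k _.
under eq_integral do rewrite EFinM.
have mi : measurable_fun setT (fun x => (\1_(E k) x : R)%:E).
  by apply/measurable_EFinP; exact: measurable_indic.
have i0 : forall x, setT x -> (0 <= (\1_(E k) x : R)%:E)%E by move=> *; rewrite lee_fin.
rewrite ge0_integralZl //.
by rewrite integral_indic // setIT EFinM fineK // fin_num_measure.
Qed.

Lemma int_sfun m f : (forall c, measurable (lev f c)) ->
  (\int[P]_t (sfun m f t)%:E =
   (\sum_(k < m * 2 ^ m) cm R m * fine (P (lev f ((k.+1)%:R * cm R m))))%:E)%E.
Proof. by move=> ml; rewrite /sfun int_sum_indic // ltW // cm_gt0. Qed.

Definition bigI (N : nat) (E : 'I_N -> set T) : set T :=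
  \bigcap_(j in [set` [set: 'I_N]%SET]) E j.

Lemma indic_prod (N : nat) (E : 'I_N -> set T) t :
  \prod_(n < N) \1_(E n) t = \1_(bigI E) t :> R.
Proof.
have [all|nall] := pselect (forall n, E n t).
  rewrite big1 => [|n _]; last by rewrite indicE mem_set.
  by rewrite indicE mem_set // => j _; exact: all.
have [n nE] : exists n, ~ E n t.
  by apply: contra_notP nall => h n; apply: contra_notP (h) => ?; exists n.
rewrite (bigD1 n) //= indicE memNset // mul0r indicE memNset //.
move=> h; apply: nE; apply: h; by rewrite /= inE.
Qed.

Lemma bigI_measurable (N : nat) (E : 'I_N -> set T) :
  (forall n, measurable (E n)) -> measurable (bigI E).
Proof. by move=> mE; apply: fin_bigcap_measurable => // *; exact: finite_finset. Qed.

Variables (N : nat) (F : 'I_N -> set (set T)).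
Hypothesis hF : forall n A, F n A -> measurable A.
Hypothesis ind : mutually_independent P F.

Lemma indep_bigI (E : 'I_N -> set T) : (forall n, F n (E n)) ->
  fine (P (bigI E)) = \prod_n fine (P (E n)).
Proof.
move=> FE; rewrite /bigI ind => [|j _]; last exact: FE.
rewrite (eq_bigr (fun j => (fine (P (E j)))%:E)); last first.
  by move=> j _; rewrite fineK // fin_num_measure //; exact: hF.
by rewrite prodEFin /=; apply: eq_bigl => j; rewrite inE.
Qed.

Lemma step m (f : 'I_N -> T -> R) : (forall n c, F n (lev (f n) c)) ->
  (\int[P]_t (\prod_n sfun m (f n) t)%:E =
   (\prod_n fine (\int[P]_t (sfun m (f n) t)%:E))%:E)%E.
Proof.
move=> hl.
set c := cm R m.
have c0 : 0 <= c by exact: ltW (cm_gt0 R m).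
pose E n (k : 'I_(m * 2 ^ m)) := lev (f n) ((k.+1)%:R * c).
have mE n k : measurable (E n k) by exact: hF (hl _ _).
rewrite (eq_bigr (fun n => \sum_k c * fine (P (E n k)))); last first.
  by move=> n _; rewrite int_sfun //= => c'; exact: hF (hl _ _).
have -> : (fun t => (\prod_n sfun m (f n) t)%:E) =
  (fun t => (\sum_(g : {ffun 'I_N -> 'I_(m * 2 ^ m)}) c ^+ N *
       \1_(bigI (fun n => E n (g n))) t)%:E).
  apply/funext => t; congr (_%:E); rewrite /sfun bigA_distr_bigA.
  apply: eq_bigr => g _; rewrite big_split /= -indic_prod prodr_const card_ord.
  by [].
rewrite int_sum_indic; last 2 first.
- exact: exprn_ge0.
- by move=> g; apply: bigI_measurable => n; exact: mE.
congr (_%:E); rewrite bigA_distr_bigA; apply: eq_bigr => g _.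
rewrite indep_bigI => [|n]; last exact: hl.
by rewrite big_split /= prodr_const card_ord.
Qed.

Lemma cvg_prodr (I : Type) (s : seq I) (u : I -> nat -> R) (l : I -> R) :
  (forall i, u i @ \oo --> l i) ->
  (fun m => \prod_(i <- s) u i m) @ \oo --> \prod_(i <- s) l i.
Proof.
move=> h; elim: s => [|i s IH].
  rewrite big_nil; under eq_fun do rewrite big_nil; exact: cvg_cst.
rewrite big_cons; under eq_fun do rewrite big_cons.
exact: cvgM (h i) IH.
Qed.

Lemma efin_lim (u : nat -> R) (l : R) : u @ \oo --> l ->
  (EFin \o u) @ \oo --> l%:E.
Proof. by move=> h; apply: cvg_EFin => //; exact: nearW. Qed.

Lemma prod_nonneg (f : 'I_N -> T -> R) :
  (forall n c, F n (lev (f n) c)) -> (forall n t, 0 <= f n t) ->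
  (forall n, P.-integrable setT (EFin \o f n)) ->
  (\int[P]_t (\prod_n f n t)%:E =
   (\prod_n fine (\int[P]_t (f n t)%:E))%:E)%E.
Proof.
move=> hl f0 fi.
have ml n c : measurable (lev (f n) c) by exact: hF (hl _ _).
have msf m n : measurable_fun setT (sfun m (f n)).
  rewrite /sfun; apply: measurable_sum => k; apply: measurable_funM.
    exact: measurable_cst.
  exact: measurable_indic.
have sf0 m n t : 0 <= sfun m (f n) t by rewrite sfunE phi_ge0.
have nd n t : nondecreasing_seq (fun m => sfun m (f n) t).
  by apply/nondecreasing_seqP => m; rewrite !sfunE phi_nd.
have cv n t : (fun m => sfun m (f n) t) @ \oo --> f n t.
  by under eq_fun do rewrite sfunE; exact: phi_cvg.
pose g m t := (\prod_n sfun m (f n) t)%:E.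
have mg m : measurable_fun setT (g m).
  by apply/measurable_EFinP; apply: measurable_prod => n _.
have g0 m t : setT t -> (0 <= g m t)%E.
  by move=> _; rewrite lee_fin; apply: prodr_ge0 => n _.
have ndg t : setT t -> nondecreasing_seq (g ^~ t).
  move=> _ m m' mm'; rewrite lee_fin; apply: ler_prod => n _.
  by rewrite sf0 /=; exact: nd.
have := @cvg_monotone_convergence _ _ _ P _ measurableT _ mg g0 ndg.
have -> : (fun x => limn (g ^~ x)) = (fun t => (\prod_n f n t)%:E).
  apply/funext => t; apply: cvg_lim => //; apply: efin_lim.
  exact: cvg_prodr.
move=> hL.
have cb n : (fun m => fine (\int[P]_t (sfun m (f n) t)%:E)) @ \oo -->
            fine (\int[P]_t (f n t)%:E).
  pose h m t := (sfun m (f n) t)%:E.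
  have mh m : measurable_fun setT (h m) by apply/measurable_EFinP.
  have h0 m t : setT t -> (0 <= h m t)%E by move=> _; rewrite lee_fin.
  have ndh t : setT t -> nondecreasing_seq (h ^~ t).
    by move=> _ m m' mm'; rewrite lee_fin; exact: nd.
  have := @cvg_monotone_convergence _ _ _ P _ measurableT _ mh h0 ndh.
  have -> : (fun x => limn (h ^~ x)) = (fun t => (f n t)%:E).
    by apply/funext => t; apply: cvg_lim => //; apply: efin_lim.
  have fin := integrable_fin_num measurableT (fi n).
  rewrite -(fineK fin) => hh; exact: fine_cvg hh.
have hR := efin_lim (cvg_prodr (s := index_enum 'I_N) cb).
have e : (fun m => \int[P]_t g m t)%E =
         EFin \o (fun m => \prod_n fine (\int[P]_t (sfun m (f n) t)%:E)).
  by apply/funext => m; rewrite /g step.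
rewrite e in hL.
by rewrite -(cvg_lim _ hL) // (cvg_lim _ hR).
Qed.

Definition sg (b : bool) : R := if b then 1 else -1.

Lemma expand (I : finType) (u v : I -> R) :
  \prod_i (u i - v i) = \sum_(g : {ffun I -> bool})
    (\prod_i sg (g i)) * \prod_i (if g i then u i else v i).
Proof.
rewrite (eq_bigr (fun i => \sum_(b : bool) (if b then u i else - v i))); last first.
  by move=> i _; rewrite big_bool.
rewrite bigA_distr_bigA; apply: eq_bigr => g _; rewrite -big_split /=.
by apply: eq_bigr => i _; case: (g i); rewrite /sg ?mul1r ?mulN1r.
Qed.

Lemma maxB (x : R) : Num.max x 0 - Num.max (- x) 0 = x.
Proof.
have [h|h] := leP 0 x.
  by rewrite (max_r _) ?subr0 // oppr_le0.
by rewrite (max_l _) ?sub0r ?opprK // oppr_ge0 ltW.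
Qed.

Definition hb (b : bool) (x : R) : R := if b then Num.max x 0 else Num.max (- x) 0.

Lemma measurable_hb b : measurable_fun setT (hb b).
Proof.
case: b.
  exact: (measurable_funrpos (@measurable_id _ R setT)).
exact: (measurable_funrneg (@measurable_id _ R setT)).
Qed.

Lemma lev_hb (X : T -> R) b c :
  exists2 B, measurable B & lev (hb b \o X) c = X @^-1` B.
Proof.
exists (setT `&` hb b @^-1` `[c, +oo[%classic).
  exact: measurable_hb measurableT _ (measurable_itv _).
apply/seteqP; split => t /=; rewrite /lev /= in_itv /= andbT => //.
by case.
Qed.

Lemma prod_signed (X : 'I_N -> T -> R) :
  (forall n B, measurable B -> F n (X n @^-1` B)) ->
  (forall n, P.-integrable setT (EFin \o X n)) ->
  P.-integrable setT (fun t => (\prod_n X n t)%:E) /\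
  (\int[P]_t (\prod_n X n t)%:E = (\prod_n fine (\int[P]_t (X n t)%:E))%:E)%E.
Proof.
move=> hX iX.
have mX n : measurable_fun setT (X n).
  by apply/measurable_EFinP; exact: measurable_int (iX n).
pose W b n := hb b \o X n.
have W0 b n t : 0 <= W b n t.
  by rewrite /W /hb /=; case: b; rewrite le_max lexx orbT.
have lW b n c : F n (lev (W b n) c).
  by have [B mB ->] := lev_hb (X n) b c; exact: hX.
have iW b n : P.-integrable setT (EFin \o W b n).
  apply: le_integrable (iX n) => //.
    by apply/measurable_EFinP; exact: measurableT_comp (measurable_hb b) (mX n).
  move=> t _; change (`|(W b n t)%:E| <= `|(X n t)%:E|)%E.
  rewrite !abse_EFin lee_fin /W /hb /=.
  case: b; rewrite ger0_norm ?le_max ?lexx ?orbT //.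
    by have [h|h] := leP 0 (X n t); rewrite ?(max_l h) ?(max_r (ltW h)) ?ler_norm.
  have [h|h] := leP 0 (X n t).
    by rewrite (max_r _) ?normr_ge0 // oppr_le0.
  by rewrite (max_l _) ?ler_normr ?lexx ?orbT // oppr_ge0 ltW.
have pn g := prod_nonneg (f := fun n => W (g n) n) (fun n => lW (g n) n)
  (fun n => W0 (g n) n) (fun n => iW (g n) n).
have iP (g : {ffun 'I_N -> bool}) :
    P.-integrable setT (fun t => (\prod_n W (g n) n t)%:E).
  apply/integrableP; split.
    by apply/measurable_EFinP; apply: measurable_prod => n _;
       exact: measurableT_comp (measurable_hb _) (mX n).
  under eq_integral do rewrite abse_EFin ger0_norm ?prodr_ge0 //.
  by rewrite pn ltry.
have eX t : (\prod_n X n t)%:E = \sum_(g : {ffun 'I_N -> bool})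
     ((\prod_n sg (g n)) * (\prod_n W (g n) n t))%:E.
  rewrite sumEFin; congr (_%:E).
  rewrite (eq_bigr (fun n => W true n t - W false n t)); last by move=> n _; rewrite maxB.
  rewrite expand; apply: eq_bigr => g _; congr (_ * _);
  by apply: eq_bigr => n _; case: (g n).
have iS : forall g : {ffun 'I_N -> bool},
    P.-integrable setT (fun t => ((\prod_n sg (g n)) * (\prod_n W (g n) n t))%:E).
  by move=> g; under eq_fun do rewrite EFinM; apply: integrableZl.
have eI (g : {ffun 'I_N -> bool}) :
  (\int[P]_t ((\prod_n sg (g n)) * (\prod_n W (g n) n t))%:E =
   ((\prod_n sg (g n)) * \prod_n fine (\int[P]_t (W (g n) n t)%:E))%:E)%E.
  by under eq_integral do rewrite EFinM; rewrite integralZl // pn.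
split.
  under eq_fun do rewrite eX.
  exact: integrable_sum.
under eq_integral do rewrite eX.
rewrite integral_sum //.
rewrite (eq_bigr _ (fun g _ => eI g)).
rewrite sumEFin; congr (_%:E).
rewrite (eq_bigr (fun n => fine (\int[P]_t (W true n t)%:E) -
                            fine (\int[P]_t (W false n t)%:E))); last first.
  move=> n _.
  have -> : (fun t => (X n t)%:E) = (fun t => (W true n t - W false n t)%:E).
    by apply/funext => t; rewrite maxB.
  exact: (RintegralB measurableT (iW true n) (iW false n)).
rewrite expand; apply: eq_bigr => g _; congr (_ * _);
by apply: eq_bigr => n _; case: (g n).
Qed.
End prodrule.

Section alg.
Variable R : realType.

Lemma dep_distr (I : finType) (J : I -> finType) (G : forall i, J i -> R) :
  \prod_i \sum_(j : J i) G i j =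
  \sum_(f : {dffun forall i, J i}) \prod_i G i (f i).
Proof.
pose P_ i := [ffun j => G i j].
have GP i : G i = P_ i :> (J i -> R) by apply/funext => j; rewrite ffunE.
rewrite (eq_bigr (fun i => \sum_(p in tagged_with J i) untag 0 (P_ i) p)); last first.
  by move=> i _; rewrite -GP -big_tag.
rewrite bigA_distr_big_dep -big_fprod.
rewrite (reindex (@fprod_of_dffun I J)); last exact/onW_bij/fprod_of_dffun_bij.
apply: eq_bigr => f _; rewrite big_mkcond /=; apply: eq_bigr => i _.
by rewrite /fprod_of_dffun fprodE GP.
Qed.

Lemma sum_delta (n a : nat) (x : R) : (a < n)%N ->
  \sum_(k < n) ((k == a :> nat)%:R * x) = x.
Proof.
move=> an; rewrite (bigD1 (Ordinal an)) //= eqxx mul1r big1 ?addr0 // => k.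
by rewrite -(inj_eq val_inj) /= => /negbTE ->; rewrite mul0r.
Qed.

Lemma sum_delta2 (p : nat) (c : 'I_(p * p)) :
  exists r0 s0, forall x : 'I_p -> 'I_p -> R,
    \sum_(r < p) \sum_(s < p) ((c == (r + s * p)%N :> nat)%:R * x r s) = x r0 s0.
Proof.
have p0 : (0 < p)%N by case: p c => [[]|].
have r0p : (c %% p < p)%N by rewrite ltn_mod.
have s0p : (c %/ p < p)%N by rewrite ltn_divLR // ltn_ord.
exists (Ordinal r0p), (Ordinal s0p) => x.
rewrite (bigD1 (Ordinal r0p)) //= (bigD1 (Ordinal s0p)) //= addnC -divn_eq eqxx mul1r.
rewrite big1 ?addr0; last first.
  move=> s /negbTE ns; case: eqP; rewrite ?mul0r // => h; exfalso.
  move: ns; rewrite -(inj_eq val_inj) /= => /negbT/eqP; apply.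
  by rewrite {1}h addnC divnMDl // divn_small ?addn0 // ltn_mod.
rewrite big1 ?addr0 // => r /negbTE nr; rewrite big1 // => s _.
case: eqP; rewrite ?mul0r // => h; exfalso.
move: nr; rewrite -(inj_eq val_inj) /= => /negbT/eqP; apply.
by rewrite {1}h addnC modnMDl modn_small.

Qed.

Lemma lt_idx (m p i j : nat) : (i < m)%N -> (j < p)%N -> (i * p + j < m * p)%N.
Proof. move=> im jp; nia. Qed.

Lemma colsum_kr (C : nat) (J : nat -> nat) (B : forall k, 'M[R]_(J k, C))
  (K : nat) (c : 'I_C) :
  \sum_(k < kr_dim K J) kr_big B K k c = \prod_(j < K) \sum_(i < J j) B j i c.
Proof.
elim: K => [|K IH] /=.
  by rewrite big_ord0 big_ord1 mxE.
rewrite big_ord_recr /= -IH mulrC.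
under eq_bigr do rewrite mxE.
rewrite exchange_big /=; under eq_bigr do rewrite exchange_big /=.
rewrite mulr_suml; apply: eq_bigr => i _; rewrite mulr_sumr; apply: eq_bigr => j _.
by rewrite sum_delta // lt_idx.
Qed.

Lemma ext_colsum (N C : nat) (I : 'I_N -> nat) (B : forall n : 'I_N, 'M[R]_(I n, C))
  (n : 'I_N) (c : 'I_C) :
  \sum_(i < ext_dim I n) ext_mx B n i c = \sum_(i < I n) B n i c.
Proof. by rewrite /ext_dim /ext_mx valK. Qed.

Lemma part2 (N Rk : nat) (I : 'I_N -> nat)
  (M : forall n : 'I_N, 'I_(I n) -> 'M[R]_(Rk, Rk)) :
  ((const_mx 1 : 'rV[R]_(kr_dim N (ext_dim I))) *m
     khatri_rao_big (fun n : 'I_N => \matrix_(i < I n, k < Rk * Rk) vecmx (M n i) k ord0)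
     *m (const_mx 1 : 'cV[R]_(Rk * Rk))) ord0 ord0
  = \sum_(idx : {dffun forall n : 'I_N, 'I_(I n)})
      \sum_(r < Rk) \sum_(s < Rk) \prod_n M n (idx n) r s.
Proof.
set B := (fun n : 'I_N => _); rewrite mxE.
under eq_bigr => c _ do rewrite mxE mxE mulr1.
under eq_bigr => c _ do under eq_bigr => k _ do rewrite mxE mul1r.
under eq_bigr => c _ do rewrite colsum_kr.
under eq_bigr => c _ do under eq_bigr => j _ do rewrite ext_colsum.
under eq_bigr => c _ do rewrite dep_distr.
rewrite exchange_big /=; apply: eq_bigr => idx _.
transitivity (\sum_(c < Rk * Rk) \sum_(r < Rk) \sum_(s < Rk)
   ((c == (r + s * Rk)%N :> nat)%:R * \prod_n M n (idx n) r s)).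
  apply: eq_bigr => c _; have [r0 [s0 h]] := sum_delta2 c.
  rewrite h; apply: eq_bigr => n _; rewrite /B mxE mxE; exact: h.
rewrite exchange_big /=; apply: eq_bigr => r _.
rewrite exchange_big /=; apply: eq_bigr => s _.
by rewrite sum_delta // addnC lt_idx.
Qed.
End alg.
Theorem theorem3 (d : measure_display) (T : measurableType d) (R : realType)
  (P : probability T R) (N Rk : nat) (I : 'I_N -> nat)
  (A : forall n : 'I_N, T -> 'M[R]_(I n, Rk)) :
  (* entries are random variables with finite second moments *)
  (forall n i r, measurable_fun setT (fun t => A n t i r)) ->
  (forall n i r, P.-integrable setT (fun t => ((A n t i r) ^+ 2)%:E)) ->
  (* the matrices A^(1),...,A^(N) are independent *)
  mutually_independent P
    (fun n : 'I_N => gen_sigma (fun (p : 'I_(I n) * 'I_Rk) t => A n t p.1 p.2)) ->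
  (* for each n, the rows a^(n)_(i_n) of A^(n) are independent *)
  (forall n : 'I_N, mutually_independent P
     (fun i : 'I_(I n) => gen_sigma (fun (r : 'I_Rk) t => A n t i r))) ->
  let EAA := fun (n : 'I_N) (i : 'I_(I n)) =>
    \matrix_(r < Rk, s < Rk) expect P (fun t => A n t i r * A n t i s) in
  let B := fun n : 'I_N =>
    \matrix_(i < I n, k < Rk * Rk) vecmx (EAA n i) k ord0 in
  let lhs := (\int[P]_t ((frob_norm (kruskal (fun n => A n t))) ^+ 2)%:E)%E in
  lhs = (\sum_(idx : {dffun forall n : 'I_N, 'I_(I n)})
           ginner (fun n : 'I_N => EAA n (idx n)))%:E /\
  lhs = (((const_mx 1 : 'rV[R]_(kr_dim N (ext_dim I))) *m khatri_rao_big B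
           *m (const_mx 1 : 'cV[R]_(Rk * Rk))) ord0 ord0)%:E.
Proof.
move=> hm hi hind hrow EAA B lhs.
set F := fun n : 'I_N => gen_sigma (fun (p : 'I_(I n) * 'I_Rk) t => A n t p.1 p.2).
have hF n E : F n E -> measurable E.
  apply: smallest_sub; first exact: sigma_algebra_measurable.
  move=> _ [j [B' mB' ->]]; have := hm n j.1 j.2 measurableT B' mB'.
  by rewrite setTI.
have hX n i r s B' : measurable B' ->
    F n ((fun t => A n t i r * A n t i s) @^-1` B').
  move=> mB'.
  pose G := [set E | exists j : 'I_(I n) * 'I_Rk, exists2 B0 : set R,
     measurable B0 & E = (fun t => A n t j.1 j.2) @^-1` B0].
  have mc i' r' : measurable_fun (setT : set (g_sigma_algebraType G))
      (fun t : g_sigma_algebraType G => A n t i' r').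
    move=> _ B0 mB0; rewrite setTI; apply: sub_gen_smallest.
    by exists (i', r'); exists B0.
  have := measurable_funM (mc i r) (mc i s) measurableT mB'.
  by rewrite setTI.
have hint n i r s : P.-integrable setT (EFin \o (fun t => A n t i r * A n t i s)).
  apply: le_integrable (integrableD measurableT (hi n i r) (hi n i s)) => //.
    by apply/measurable_EFinP; exact: measurable_funM.
  move=> t _.
  change (`|(A n t i r * A n t i s)%:E| <= `|((A n t i r) ^+ 2)%:E + ((A n t i s) ^+ 2)%:E|)%E.
  rewrite -EFinD !abse_EFin lee_fin [X in _ <= X]ger0_norm ?addr_ge0 ?sqr_ge0 //.
  by rewrite ler_norml; apply/andP; split; nra.
have key idx r s := @prod_signed d T R P N F hF hind
  (fun n t => A n t (idx n) r * A n t (idx n) s)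
  (fun n => hX n (idx n) r s) (fun n => hint n (idx n) r s).
pose Y (idx : {dffun forall n : 'I_N, 'I_(I n)}) (r s : 'I_Rk) t :=
  (\prod_n (A n t (idx n) r * A n t (idx n) s))%:E.
have eY t : ((frob_norm (kruskal (fun n => A n t))) ^+ 2)%:E =
    (\sum_(idx : {dffun forall n : 'I_N, 'I_(I n)}) \sum_(r < Rk) \sum_(s < Rk) Y idx r s t)%E.
  rewrite /frob_norm sqr_sqrtr; last by apply: sumr_ge0 => *; exact: sqr_ge0.
  rewrite -sumEFin; apply: eq_bigr => idx _.
  rewrite /kruskal expr2 mulr_suml -sumEFin; apply: eq_bigr => r _.
  rewrite mulr_sumr -sumEFin; apply: eq_bigr => s _.
  by rewrite /Y big_split.
have LHS : lhs = (\sum_(idx : {dffun forall n : 'I_N, 'I_(I n)}) \sum_(r < Rk) \sum_(s < Rk)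
                  \prod_n EAA n (idx n) r s)%:E.
  have i1 idx r s := (key idx r s).1.
  have i2 idx r : P.-integrable setT (fun t => \sum_(s < Rk) Y idx r s t).
    by apply: (integrable_sum measurableT) => s _; exact: i1.
  have i3 idx : P.-integrable setT (fun t => \sum_(r < Rk) \sum_(s < Rk) Y idx r s t).
    by apply: (integrable_sum measurableT) => r _; exact: i2.
  rewrite /lhs; under eq_integral do rewrite eY.
  rewrite (integral_sum measurableT i3).
  rewrite -sumEFin; apply: eq_bigr => idx _.
  rewrite (integral_sum measurableT (i2 idx)).
  rewrite -sumEFin; apply: eq_bigr => r _.
  rewrite (integral_sum measurableT (i1 idx r)).
  rewrite -sumEFin; apply: eq_bigr => s _.
  rewrite /Y (key idx r s).2; congr (_%:E); apply: eq_bigr => n _.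
  by rewrite /EAA mxE.
split; first by rewrite LHS.
by rewrite LHS /B part2.
Qed.
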